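(* Assume that $\gamma(s)>0$ for every $s\in S$. Fix a stationary policy $f$ and a cost vector $c\in\mathbb{R}^{|\mathcal{K}|}$. Consider the problem $$(\mathrm{I})\qquad \max_{\mathfrak{u}\in\mathfrak{U}}\ (1-\alpha)\,\gamma^T\big(I-\alpha P_f(\mathfrak{u})\big)^{-1}c_f,$$ and the second-order cone program $$(\mathrm{II})\qquad \max_{\mathfrak{w}_c,\ \mathfrak{z}_c}\ \mathfrak{w}_c^T c_f$$ subject to, for all $s\in S$, $$B(s)\,z_c(\cdot\mid s,\cdot)-b(s)\,w_c(s)\le 0,$$ $$\big\|M(s)^T z_c(\cdot\mid s,\cdot)+m(s)\,w_c(s)\big\|_2\le x(s)^T z_c(\cdot\mid s,\cdot)+y(s)\,w_c(s),$$ and $$\mathfrak{w}_c\ge(1-\alpha)\gamma,\qquad \mathfrak{w}_c^T(I-\alpha\bar P_f)-\alpha\sum_{s\in S} z_c(\cdot\mid s,\cdot)^T F_f(s)=(1-\alpha)\gamma^T,$$ where $\mathfrak{w}_c=(w_c(s))_{s\in S}\in\mathbb{R}^{|S|}$ and $\mathfrak{z}_c=(z_c(s'\mid s,a))_{(s,a,s')\in\mathcal{H}}$ with $z_c(\cdot\mid s,\cdot)=(z_c(s'\mid s,a))_{(a,s')\in A(s)\times S}\in\mathbb{R}^{|A(s)||S|}$. Then problems (I) and (II) are equivalent. That is, for every feasible $\mathfrak{u}$ of (I) there is a feasible $(\mathfrak{w}_c,\mathfrak{z}_c)$ of (II) with the same objective value, and conversely. In particular, their optimal values coincide.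
   Context: Setting. Let $S$ be a finite nonempty set of states. For each $s\in S$, let $A(s)$ be a finite nonempty set of actions. Put $\mathcal{K}=\{(s,a): s\in S,\ a\in A(s)\}$ and $\mathcal{H}=\{(s,a,s'): (s,a)\in\mathcal{K},\ s'\in S\}$. Let $\alpha\in(0,1)$ be a discount factor, and let $\gamma=(\gamma(s))_{s\in S}$ be a probability distribution on $S$ (the initial distribution). Let $\bar p(s'\mid s,a)\ge 0$, for $(s,a,s')\in\mathcal{H}$, be observed transition probabilities with $\sum_{s'\in S}\bar p(s'\mid s,a)=1$. Uncertainty. The true transition probabilities are $p(s'\mid s,a)=\bar p(s'\mid s,a)+u(s'\mid s,a)$, where the uncertain vector is $\mathfrak{u}=(u(s'\mid s,a))_{(s,a,s')\in\mathcal{H}}$. For $s\in S$, write $u(\cdot\mid s,\cdot)=(u(s'\mid s,a))_{(a,s')\in A(s)\times S}\in\mathbb{R}^{|A(s)||S|}$. The uncertainty set is $$\mathfrak{U}=\Big\{\mathfrak{u} : B(s)u(\cdot\mid s,\cdot)-b(s)\le 0,\ \|M(s)^Tu(\cdot\mid s,\cdot)+m(s)\|_2\le x(s)^Tu(\cdot\mid s,\cdot)+y(s)\ \ \forall s\in S\Big\}.$$ Here $B(s)\in\mathbb{R}^{\ell_p(s)\times|A(s)||S|}$, $b(s)\in\mathbb{R}^{\ell_p(s)}$, $M(s)\in\mathbb{R}^{|A(s)||S|\times \ell_{sc}(s)}$, $m(s)\in\mathbb{R}^{\ell_{sc}(s)}$, $x(s)\in\mathbb{R}^{|A(s)||S|}$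 and $y(s)\in\mathbb{R}$. The polyhedral constraints $B(s)u(\cdot\mid s,\cdot)\le b(s)$ include the conditions $\underline u(s'\mid s,a)\le u(s'\mid s,a)\le \bar u(s'\mid s,a)$ and $\sum_{s'\in S}u(s'\mid s,a)=0$ for all $(s,a,s')\in\mathcal{H}$. The bounds are such that $\bar p+\mathfrak{u}$ remains a vector of transition probabilities. Policies and matrices. A stationary policy is $f=(f(s,a))_{(s,a)\in\mathcal{K}}$ with $f(s,a)\ge0$ and $\sum_{a\in A(s)}f(s,a)=1$ for each $s$. - $P_f(\mathfrak{u})$ is the $|S|\times|S|$ matrix with $(s,s')$ entry $\sum_{a\in A(s)}f(s,a)\big(\bar p(s'\mid s,a)+u(s'\mid s,a)\big)$. - $\bar P_f$ is the $|S|\times|S|$ matrix with $(s,s')$ entry $\sum_{a\in A(s)}f(s,a)\bar p(s'\mid s,a)$. - For a cost vector $c=(c(s,a))_{(s,a)\in\mathcal{K}}$, $c_f\in\mathbb{R}^{|S|}$ has entries $c_f(s)=\sum_{a\in A(s)}f(s,a)c(s,a)$. - $F_f(s)$ is the $(|A(s)||S|)\times|S|$ matrix such that $v^T F_f(s)e_{s'}=\sum_{a\in A(s)}f(s,a)\,v(s'\mid s,a)$ for every $v=(v(s'\mid s,a))_{(a,s')\in A(s)\times S}$. - $e_{s}$ denotes the $s$-th standard unit vector in $\mathbb{R}^{|S|}$, and $I$ is the $|S|\times|S|$ identity matrix. *)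

(* Defs.v *)
(* S = 'I_N.+1 (finite, nonempty); A(s) = 'I_(ka s).+1
   (finite, nonempty).  Vectors indexed by A(s) x S are functions
   A s -> S -> R; matrices acting on them are written out entrywise. *)
From HB Require Import structures.
From mathcomp Require Import all_boot all_order all_algebra.
Set Implicit Arguments. Unset Strict Implicit. Unset Printing Implicit Defensive.
Import Order.TTheory GRing.Theory Num.Theory.
Local Open Scope ring_scope.

Section Defs.
Variable R : rcfType.
Variable N : nat.
Notation St := 'I_N.+1.
Variable ka : St -> nat.
Notation Act s := 'I_(ka s).+1.

Definition norm2 (l : nat) (v : 'I_l -> R) : R := Num.sqrt (\sum_(j < l) v j ^+ 2).

Definition blockvec := forall s : St, Act s -> St -> R.

Definition Bmul (lp : St -> nat) (B : forall s, 'I_(lp s) -> Act s -> St -> R)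
  (s : St) (v : Act s -> St -> R) (i : 'I_(lp s)) : R :=
  \sum_(a : Act s) \sum_(s' : St) B s i a s' * v a s'.

Definition MTmul (lsc : St -> nat) (M : forall s, Act s -> St -> 'I_(lsc s) -> R)
  (s : St) (v : Act s -> St -> R) (j : 'I_(lsc s)) : R :=
  \sum_(a : Act s) \sum_(s' : St) M s a s' j * v a s'.

Definition dotv (s : St) (x : Act s -> St -> R) (v : Act s -> St -> R) : R :=
  \sum_(a : Act s) \sum_(s' : St) x a s' * v a s'.

Definition Pf (f : forall s, Act s -> R) (pbar u : blockvec) : 'M[R]_N.+1 :=
  \matrix_(s, s') \sum_(a : Act s) f s a * (pbar s a s' + u s a s').

Definition Pbarf (f : forall s, Act s -> R) (pbar : blockvec) : 'M[R]_N.+1 :=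
  \matrix_(s, s') \sum_(a : Act s) f s a * pbar s a s'.

Definition cf (f c : forall s, Act s -> R) : 'cV[R]_N.+1 :=
  \col_s \sum_(a : Act s) f s a * c s a.

(* F_f(s) : rows indexed by (a, s'') in A(s) x S, columns by S;
   v^T F_f(s) e_{s'} = sum_a f(s,a) v(s'|s,a) *)
Definition Ff (f : forall s, Act s -> R) (s : St) (a : Act s) (s'' s' : St) : R :=
  if s'' == s' then f s a else 0.
End Defs.

(* Main.v *)
Require Import Defs.
From HB Require Import structures.
From mathcomp Require Import all_boot all_order all_algebra.
From mathcomp Require Import ring lra.
Import Order.TTheory GRing.Theory Num.Theory.
Local Open Scope ring_scope.

Lemma key_nonneg (R : realFieldType) n (P : 'M[R]_n) (al : R) (v g : 'I_n -> R) :
  0 <= al -> al < 1 ->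
  (forall i j, 0 <= P i j) -> (forall i, \sum_j P i j <= 1) ->
  (forall j, 0 <= g j) ->
  (forall j, v j = g j + al * \sum_i v i * P i j) ->
  forall j, 0 <= v j.
Proof.
move=> al0 al1 P0 P1 g0 hv.
pose S := \sum_j (v j < 0)%R%:R * v j.
have hS : S >= al * S.
  rewrite {2}/S.
  have -> : \sum_j (v j < 0)%R%:R * v j =
     \sum_j (v j < 0)%R%:R * g j + al * \sum_i v i * (\sum_j (v j < 0)%R%:R * P i j).
    rewrite (eq_bigr (fun j => (v j < 0)%R%:R * g j + (v j < 0)%R%:R * (al * \sum_i v i * P i j))); last by move=> j _; rewrite -mulrDr -hv.
    rewrite big_split /=; congr (_ + _).
    transitivity (\sum_j \sum_i (v j < 0)%R%:R * (al * (v i * P i j))).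
      by apply: eq_bigr => j _; rewrite mulr_sumr mulr_sumr.
    rewrite exchange_big mulr_sumr /=; apply: eq_bigr => i _.
    rewrite mulr_sumr mulr_sumr; apply: eq_bigr => j _; ring.
  have h1 : 0 <= \sum_j (v j < 0)%R%:R * g j.
    by apply: sumr_ge0 => j _; apply: mulr_ge0 => //; rewrite ler0n.
  have h2 : S <= \sum_i v i * (\sum_j (v j < 0)%R%:R * P i j).
    apply: ler_sum => i _.
    have q0 : 0 <= \sum_j (v j < 0)%R%:R * P i j.
      by apply: sumr_ge0 => j _; apply: mulr_ge0 => //; rewrite ler0n.
    have q1 : \sum_j (v j < 0)%R%:R * P i j <= 1.
      apply: le_trans (P1 i); apply: ler_sum => j _.
      by case: (v j < 0); rewrite ?mul1r ?mul0r.
    case: ltP => hvi; rewrite ?mul1r ?mul0r; nra.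
  have h3 : 0 <= al * (\sum_i v i * (\sum_j (v j < 0)%R%:R * P i j) - S) by apply: mulr_ge0 => //; rewrite subr_ge0.
  nra.
have S0 : 0 <= S by nra.
have Sle : S <= 0.
  by apply: sumr_le0 => j _; case: ltP => h; rewrite ?mul1r ?mul0r // ltW.
have SE : \sum_j - ((v j < 0)%R%:R * v j) = 0.
  by rewrite sumrN; apply/eqP; rewrite oppr_eq0 eq_le Sle S0.
have H0 : forall j, 0 <= -((v j < 0)%R%:R * v j).
  by move=> j; case: ltP => h; rewrite ?mul1r ?mul0r ?oppr0 // oppr_ge0 ltW.
move=> j; have := psumr_eq0P (fun i _ => H0 i) SE (i:=j) isT.
move=> e; case: (ltP (v j) 0) => // h; move: e; rewrite h mul1r => /eqP; rewrite oppr_eq0 => /eqP e; lra.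
Qed.
Arguments key_nonneg {R n P al v g}.


Lemma IaP_unit (R : realFieldType) n (P : 'M[R]_n) (al : R) :
  0 <= al -> al < 1 ->
  (forall i j, 0 <= P i j) -> (forall i, \sum_j P i j <= 1) ->
  (1%:M - al *: P) \in unitmx.
Proof.
move=> al0 al1 P0 P1.
rewrite -row_free_unit -kermx_eq0; apply/eqP/row_matrixP => i; rewrite row0.
set K := row i (kermx _).
have hK : K *m (1%:M - al *: P) = 0 by rewrite /K -row_mul mulmx_ker row0.
have E : forall j, K 0 j = 0 + al * \sum_k K 0 k * P k j.
  move=> j; move/rowP: hK => /(_ j).
  rewrite mulmxBr mulmx1 -scalemxAr !mxE => /eqP; rewrite subr_eq0 => /eqP ->.
  by rewrite add0r.
have E' : forall j, - K 0 j = 0 + al * \sum_k (- K 0 k) * P k j.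
  move=> j; rewrite E add0r add0r -mulrN -sumrN; congr (_ * _).
  by apply: eq_bigr => k _; rewrite mulNr.
have g0 : forall j : 'I_n, 0 <= (0 : R) by [].
have h1 := (@key_nonneg R n P al _ (fun _ => 0) al0 al1 P0 P1 g0 E).
have h2 := (@key_nonneg R n P al _ (fun _ => 0) al0 al1 P0 P1 g0 E').
apply/rowP => j; rewrite [RHS]mxE; apply/eqP; rewrite eq_le.
by rewrite h1 andbT -oppr_ge0 h2.
Qed.
Arguments IaP_unit {R n P al}.


Lemma dsum_scale (R : realFieldType) (I J : finType) (K z u : I -> J -> R) (t : R) :
  (forall a b, z a b = t * u a b) ->
  \sum_a \sum_b K a b * z a b = t * \sum_a \sum_b K a b * u a b.
Proof.
move=> hz; rewrite mulr_sumr; apply: eq_bigr => a _; rewrite mulr_sumr.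
by apply: eq_bigr => c _; rewrite hz; ring.
Qed.
Arguments dsum_scale {R I J} K {z u t}.

Lemma norm2_ext (R : rcfType) l (g h : 'I_l -> R) :
  (forall j, g j = h j) -> norm2 g = norm2 h.
Proof. by move=> e; rewrite /norm2; congr Num.sqrt; apply: eq_bigr => j _; rewrite e. Qed.

Lemma norm2_scale (R : rcfType) l (g : 'I_l -> R) (t : R) :
  0 <= t -> norm2 (fun j => t * g j) = t * norm2 g.
Proof.
move=> t0; rewrite /norm2.
under eq_bigr do rewrite exprMn.
by rewrite -mulr_sumr sqrtrM ?sqr_ge0 // sqrtr_sqr ger0_norm.
Qed.

Lemma rowIaQ (R : comPzRingType) n (w : 'I_n -> R) (al : R) (Q : 'M[R]_n) j :
  ((\row_s w s) *m (1%:M - al *: Q)) 0 j = w j - al * \sum_i w i * Q i j.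
Proof.
rewrite mulmxBr mulmx1 -scalemxAr !mxE.
by congr (_ - _ * _); apply: eq_bigr => i _; rewrite mxE.
Qed.

Lemma feas_equiv (R : rcfType) (N : nat) (ka : 'I_N.+1 -> nat)
  (lp : 'I_N.+1 -> nat)
  (B : forall s : 'I_N.+1, 'I_(lp s) -> 'I_(ka s).+1 -> 'I_N.+1 -> R)
  (b : forall s : 'I_N.+1, 'I_(lp s) -> R)
  (lsc : 'I_N.+1 -> nat)
  (M : forall s : 'I_N.+1, 'I_(ka s).+1 -> 'I_N.+1 -> 'I_(lsc s) -> R)
  (m : forall s : 'I_N.+1, 'I_(lsc s) -> R)
  (x : forall s : 'I_N.+1, 'I_(ka s).+1 -> 'I_N.+1 -> R)
  (y : 'I_N.+1 -> R) (s : 'I_N.+1) (t : R)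
  (u z : 'I_(ka s).+1 -> 'I_N.+1 -> R) :
  0 < t -> (forall a s', z a s' = t * u a s') ->
  ((forall i, Bmul B z i - b s i * t <= 0) /\
    norm2 (fun j => MTmul M z j + m s j * t) <= dotv (x s) z + y s * t) <->
  ((forall i, Bmul B u i - b s i <= 0) /\
    norm2 (fun j => MTmul M u j + m s j) <= dotv (x s) u + y s).
Proof.
move=> t0 hz.
have eB : forall i, Bmul B z i - b s i * t = t * (Bmul B u i - b s i).
  by move=> i; rewrite /Bmul (dsum_scale _ hz); ring.
have eN : norm2 (fun j => MTmul M z j + m s j * t) =
          t * norm2 (fun j => MTmul M u j + m s j).
  rewrite -norm2_scale ?ltW //; apply: norm2_ext => j.
  by rewrite /MTmul (dsum_scale _ hz); ring.
have eD : dotv (x s) z + y s * t = t * (dotv (x s) u + y s).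
  by rewrite /dotv (dsum_scale _ hz); ring.
rewrite eN eD ler_pM2l //; split=> -[h1 h2]; split=> // i.
  by have := h1 i; rewrite eB pmulr_rle0.
by rewrite eB pmulr_rle0.
Qed.
Arguments feas_equiv {R N ka lp B b lsc M m x y s t u z}.


Lemma stochP (R : rcfType) (N : nat) (ka : 'I_N.+1 -> nat)
  (pbar ulow u : forall s : 'I_N.+1, 'I_(ka s).+1 -> 'I_N.+1 -> R)
  (f : forall s : 'I_N.+1, 'I_(ka s).+1 -> R) :
  (forall s a s', ulow s a s' <= u s a s') -> (forall s a, \sum_s' u s a s' = 0) ->
  (forall s a, \sum_s' pbar s a s' = 1) ->
  (forall s a s', 0 <= pbar s a s' + ulow s a s') ->
  (forall s a, 0 <= f s a) -> (forall s, \sum_a f s a = 1) ->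
  (forall i j, 0 <= Pf f pbar u i j) /\ (forall i, \sum_j Pf f pbar u i j <= 1).
Proof.
move=> hlo hu0 pb1 hpl f0 f1; split.
  move=> i j; rewrite mxE; apply: sumr_ge0 => a _; apply: mulr_ge0 => //.
  have := hlo i a j; have := hpl i a j; lra.
move=> i; suff -> : \sum_j Pf f pbar u i j = 1 by [].
under eq_bigr do rewrite mxE.
rewrite exchange_big /= -(f1 i); apply: eq_bigr => a _.
by rewrite -mulr_sumr big_split /= pb1 hu0 addr0 mulr1.
Qed.

Lemma eqn_lemma (R : rcfType) (N : nat) (ka : 'I_N.+1 -> nat)
  (pbar u z : forall s : 'I_N.+1, 'I_(ka s).+1 -> 'I_N.+1 -> R)
  (f : forall s : 'I_N.+1, 'I_(ka s).+1 -> R) (w : 'I_N.+1 -> R) (al : R) :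
  (forall s a s', z s a s' = w s * u s a s') -> forall s',
  ((\row_s w s) *m (1%:M - al *: Pbarf f pbar)) 0 s'
      - al * \sum_s \sum_(a : 'I_(ka s).+1) \sum_(s'' : 'I_N.+1)
                   z s a s'' * Ff f a s'' s'
  = ((\row_s w s) *m (1%:M - al *: Pf f pbar u)) 0 s'.
Proof.
move=> hz s'; rewrite !rowIaQ.
have H : \sum_s w s * Pf f pbar u s s' = \sum_s w s * Pbarf f pbar s s' +
   \sum_s \sum_(a : 'I_(ka s).+1) \sum_(s'' : 'I_N.+1) z s a s'' * Ff f a s'' s'.
  rewrite -big_split; apply: eq_bigr => s _; rewrite !mxE mulr_sumr mulr_sumr -big_split.
  apply: eq_bigr => a _ /=; rewrite (bigD1 s') //= big1 ?addr0.
    by rewrite /Ff eqxx hz; ring.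
  by move=> k /negbTE hk; rewrite /Ff hk mulr0.
by rewrite H; ring.
Qed.
Arguments eqn_lemma {R N ka pbar u z f w al}.

Theorem mainTheorem1
  (R : rcfType) (N : nat) (ka : 'I_N.+1 -> nat)
  (alpha : R) (gamma : 'I_N.+1 -> R)
  (pbar : forall s : 'I_N.+1, 'I_(ka s).+1 -> 'I_N.+1 -> R)
  (ulow uup : forall s : 'I_N.+1, 'I_(ka s).+1 -> 'I_N.+1 -> R)
  (lp : 'I_N.+1 -> nat)
  (B : forall s : 'I_N.+1, 'I_(lp s) -> 'I_(ka s).+1 -> 'I_N.+1 -> R)
  (b : forall s : 'I_N.+1, 'I_(lp s) -> R)
  (lsc : 'I_N.+1 -> nat)
  (M : forall s : 'I_N.+1, 'I_(ka s).+1 -> 'I_N.+1 -> 'I_(lsc s) -> R)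
  (m : forall s : 'I_N.+1, 'I_(lsc s) -> R)
  (x : forall s : 'I_N.+1, 'I_(ka s).+1 -> 'I_N.+1 -> R)
  (y : 'I_N.+1 -> R)
  (f c : forall s : 'I_N.+1, 'I_(ka s).+1 -> R) :
  (* discount factor and initial distribution *)
  0 < alpha -> alpha < 1 ->
  (forall s, 0 < gamma s) -> \sum_s gamma s = 1 ->
  (* observed transition probabilities *)
  (forall s a s', 0 <= pbar s a s') ->
  (forall s a, \sum_s' pbar s a s' = 1) ->
  (* the polyhedral constraints B(s) v <= b(s) include the bounds and the
     zero-sum conditions *)
  (forall s (v : 'I_(ka s).+1 -> 'I_N.+1 -> R),
      (forall i, Bmul B v i - b s i <= 0) ->
      (forall a s', ulow s a s' <= v a s' <= uup s a s') /\
      (forall a, \sum_s' v a s' = 0)) ->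
  (* the bounds keep pbar + u a vector of transition probabilities *)
  (forall s a s', 0 <= pbar s a s' + ulow s a s') ->
  (forall s a s', pbar s a s' + uup s a s' <= 1) ->
  (* stationary policy *)
  (forall s a, 0 <= f s a) -> (forall s, \sum_a f s a = 1) ->
  let feasI := fun u : blockvec R ka =>
    forall s,
      (forall i, Bmul B (u s) i - b s i <= 0) /\
      norm2 (fun j => MTmul M (u s) j + m s j) <= dotv (x s) (u s) + y s in
  let objI := fun u : blockvec R ka =>
    (1 - alpha) * ((\row_s gamma s) *m invmx (1%:M - alpha *: Pf f pbar u)
                     *m cf f c) ord0 ord0 in
  let feasII := fun (w : 'I_N.+1 -> R) (z : blockvec R ka) =>
    (forall s,
      (forall i, Bmul B (z s) i - b s i * w s <= 0) /\
      norm2 (fun j => MTmul M (z s) j + m s j * w s)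
        <= dotv (x s) (z s) + y s * w s) /\
    (forall s, (1 - alpha) * gamma s <= w s) /\
    (forall s',
      ((\row_s w s) *m (1%:M - alpha *: Pbarf f pbar)) ord0 s'
      - alpha * \sum_s \sum_(a : 'I_(ka s).+1) \sum_(s'' : 'I_N.+1)
                   z s a s'' * Ff f a s'' s'
      = (1 - alpha) * gamma s') in
  let objII := fun w : 'I_N.+1 -> R => ((\row_s w s) *m cf f c) ord0 ord0 in
  (forall u, feasI u -> exists w z, feasII w z /\ objII w = objI u) /\
  (forall w z, feasII w z -> exists u, feasI u /\ objI u = objII w).
Proof.
move=> al0 al1 g0 g1 pb0 pb1 HB hlo hup f0 f1 feasI objI feasII objII.
have al0' : 0 <= alpha by exact: ltW.
have stoch : forall u : blockvec R ka, (forall s i, Bmul B (u s) i - b s i <= 0) ->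
    (forall i j, 0 <= Pf f pbar u i j) /\ (forall i, \sum_j Pf f pbar u i j <= 1).
  move=> u hu; apply: (@stochP R N ka pbar ulow u f) => //.
    by move=> s a s'; have [h _] := HB s (u s) (hu s); have /andP[] := h a s'.
  by move=> s a; have [_ h] := HB s (u s) (hu s); apply: h.
have gpos : forall s, 0 < (1 - alpha) * gamma s.
  by move=> s; apply: mulr_gt0 => //; rewrite subr_gt0.
split.
- move=> u hu.
  have [P0 P1] := stoch u (fun s => (hu s).1).
  have uA := IaP_unit al0' al1 P0 P1.
  set A := 1%:M - alpha *: Pf f pbar u in uA.
  pose wr := (1 - alpha) *: ((\row_s gamma s) *m invmx A).
  pose w := fun s => wr 0 s.
  have rw : \row_s w s = wr by apply/rowP => j; rewrite mxE.
  have hwA : (\row_s w s) *m A = (1 - alpha) *: \row_s gamma s.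
    by rewrite rw /wr -scalemxAl mulmxKV.
  have hwe : forall j, w j = (1 - alpha) * gamma j + alpha * \sum_i w i * Pf f pbar u i j.
    move=> j; move/rowP: hwA => /(_ j); rewrite rowIaQ !mxE => e; lra.
  have w0 := key_nonneg al0' al1 P0 P1 (fun j => ltW (gpos j)) hwe.
  have wge : forall s, (1 - alpha) * gamma s <= w s.
    move=> s; rewrite hwe lerDl; apply: mulr_ge0 => //.
    by apply: sumr_ge0 => i _; apply: mulr_ge0.
  exists w, (fun s a s' => w s * u s a s'); split; [split; [|split] | ].
  + move=> s; apply/(feas_equiv (lt_le_trans (gpos s) (wge s))).
      by [].
    exact: hu.
  + exact: wge.
  + by move=> s'; rewrite (@eqn_lemma _ _ _ _ u) // hwA !mxE.
  + by rewrite /objII /objI rw /wr -!scalemxAl mxE.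
- move=> w z [hfz [hw heq]].
  have wpos : forall s, 0 < w s by move=> s; exact: lt_le_trans (gpos s) (hw s).
  pose u : blockvec R ka := fun s a s' => z s a s' / w s.
  have hz : forall s a s', z s a s' = w s * u s a s'.
    by move=> s a s'; rewrite /u mulrC divfK // gt_eqF.
  have hu : feasI u.
    by move=> s; apply/(feas_equiv (wpos s) (hz s)); exact: hfz.
  exists u; split => //.
  have [P0 P1] := stoch u (fun s => (hu s).1).
  have uA := IaP_unit al0' al1 P0 P1.
  set A := 1%:M - alpha *: Pf f pbar u in uA.
  have hwA : (\row_s w s) *m A = (1 - alpha) *: \row_s gamma s.
    by apply/rowP => j; rewrite -(eqn_lemma hz) heq !mxE.
  by rewrite /objII /objI -(mulmxK uA (\row_s w s)) hwA -!scalemxAl [RHS]mxE.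
Qed.
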